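(* Let $X$ be a one-sided subshift with $\sigma(X)=X$ such that $Sp_l(X,\sigma)$ is finite and contains no periodic point of $\sigma$. Then for every $x\in Sp_l(X,\sigma)$, the point $\imath(x)$ is an isolated point of $\widetilde{X}$.
   Context: $X\subseteq\mathcal{A}^{\mathbb{N}}$ is a closed shift-invariant set over a finite alphabet $\mathcal{A}$, $\sigma$ the left shift; $Sp_l(X,\sigma)=\{x\in X: |\sigma^{-1}(\{x\})|\ge2\}$; $x$ is periodic if $\sigma^n(x)=x$ for some $n\ge1$. The cover: for $x\in X$ and $l\ge0$ let $P_l(x)=\{\mu\in\mathcal{L}(X): |\mu|=l,\ \mu x\in X\}$. Let $\mathcal{I}=\{(k,l)\in\mathbb{N}^2: k\le l\}$, ordered by $(k,l)\preceq(k',l')$ iff $k\le k'$ and $l-k\le l'-k'$. For $(k,l)\in\mathcal{I}$ write $x\overset{k,l}{\sim}y$ iff $x_{[0,k)}=y_{[0,k)}$ and $P_l(\sigma^k(x))=P_l(\sigma^k(y))$; let ${}_kX_l=X/\overset{k,l}{\sim}$ (finite, discrete) with classes ${}_k[x]_l$. $\widetilde{X}$ is the projective limit of $({}_kX_l)_{(k,l)\in\mathcal{I}}$ under the maps ${}_{k'}[x]_{l'}\mapsto{}_k[x]_l$ for $(k,l)\preceq(k',l')$, with the projective limit topology. The shift $\sigma_{\widetilde{X}}(\tilde{x})_{(k,l)}={}_k[\sigma(z)]_l$ with $z$ any representative of $\tilde{x}_{(k+1,l+1)}$; $\imath(x)=({}_k[x]_l)_{(k,l)\in\mathcal{I}}$.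 *)

(* Defs.v *)
From mathcomp Require Import all_boot.
Set Implicit Arguments. Unset Strict Implicit. Unset Printing Implicit Defensive.

Section Shift.
Variable A : finType.

Definition seqN := nat -> A.

Definition shift (x : seqN) : seqN := fun n => x n.+1.

Definition window (x : seqN) (i n : nat) : seq A := mkseq (fun j => x (i + j)) n.

Definition concat (mu : seq A) (x : seqN) : seqN :=
  fun n => if n < size mu then nth (x 0) mu n else x (n - size mu).

Definition closedN (X : seqN -> Prop) : Prop :=
  forall x, (forall n, exists y, X y /\ forall i, i < n -> y i = x i) -> X x.

Definition subshift (X : seqN -> Prop) : Prop :=
  closedN X /\ forall x, X x -> X (shift x).

Definition shift_onto (X : seqN -> Prop) : Prop :=
  (forall x, X x -> X (shift x)) /\
  (forall x, X x -> exists y, X y /\ shift y = x).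

Definition lang (X : seqN -> Prop) (mu : seq A) : Prop :=
  exists x i, X x /\ mu = window x i (size mu).

Definition Spl (X : seqN -> Prop) (x : seqN) : Prop :=
  X x /\ exists y z, X y /\ X z /\ y <> z /\ shift y = x /\ shift z = x.

Definition periodic (x : seqN) : Prop :=
  exists n, 1 <= n /\ iter n shift x = x.

Definition finite_set (P : seqN -> Prop) : Prop :=
  exists s : seq seqN, forall x, P x -> exists2 i, i < size s & nth x s i = x.

Definition Pl (X : seqN -> Prop) (l : nat) (x : seqN) (mu : seq A) : Prop :=
  lang X mu /\ size mu = l /\ X (concat mu x).

Definition klrel (X : seqN -> Prop) (k l : nat) (x y : seqN) : Prop :=
  window x 0 k = window y 0 k /\
  forall mu, Pl X l (iter k shift x) mu <-> Pl X l (iter k shift y) mu.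

Definition inI (k l : nat) : Prop := k <= l.
Definition preceq (k l k' l' : nat) : Prop := k <= k' /\ l - k <= l' - k'.

(* Elements of the projective limit X~ are represented by families of
   representatives z k l in X of the classes _k[z k l]_l, (k,l) in I,
   that are compatible under the bonding maps. *)
Definition Xtilde (X : seqN -> Prop) (z : nat -> nat -> seqN) : Prop :=
  (forall k l, inI k l -> X (z k l)) /\
  (forall k l k' l', inI k l -> inI k' l' -> preceq k l k' l' ->
     klrel X k l (z k' l') (z k l)).

Definition teq (X : seqN -> Prop) (z z' : nat -> nat -> seqN) : Prop :=
  forall k l, inI k l -> klrel X k l (z k l) (z' k l).

Definition imath (x : seqN) : nat -> nat -> seqN := fun _ _ => x.

(* t is isolated in X~ for the projective limit topology: some basic open
   set (finitely many coordinates fixed) contains only t. *)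
Definition isolated_tilde (X : seqN -> Prop) (t : nat -> nat -> seqN) : Prop :=
  exists F : seq (nat * nat),
    (forall p, p \in F -> inI p.1 p.2) /\
    forall z, Xtilde X z ->
      (forall p, p \in F -> klrel X p.1 p.2 (z p.1 p.2) (t p.1 p.2)) ->
      teq X z t.

End Shift.

(* Main.v *)
From Stdlib Require Import FunctionalExtensionality Classical.
Require Import Defs.
From mathcomp Require Import all_boot zify.

Set Implicit Arguments. Unset Strict Implicit.

Section Aux.
Variable A : finType.
Implicit Types x y : seqN A.

Lemma iter_shiftE k x n : iter k (@shift A) x n = x (k + n).
Proof.
elim: k n => [|k IH] n //=.
by rewrite /shift IH addSnnS.
Qed.

Lemma klrel_sym X k l x y : klrel X k l x y -> klrel X k l y x.
Proof. by move=> [H1 H2]; split=> // mu; rewrite H2. Qed.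

Lemma klrel_trans X k l x y w : klrel X k l x y -> klrel X k l y w -> klrel X k l x w.
Proof. by move=> [H1 H2] [H3 H4]; split; [rewrite H1|move=> mu; rewrite H2 H4]. Qed.

Lemma window_eq x y k n : window x 0 k = window y 0 k -> n < k -> x n = y n.
Proof.
move=> H lt; have := congr1 (fun s => nth (x 0) s n) H.
by rewrite /window !nth_mkseq.
Qed.

Lemma sep_list (x : seqN A) (s : seq (seqN A)) : exists K, forall i d, i < size s ->
  nth d s i <> x -> exists n, n < K /\ nth d s i n <> x n.
Proof.
elim: s => [|w s [K IH]]; first by exists 0.
case: (classic (w = x)) => [ew|nw].
  exists K => -[|i] d /=; [by move=> _ /(_ ew)|exact: IH].
have [n Hn] : exists n, w n <> x n.
  apply: NNPP => H; apply: nw; apply: functional_extensionality => n.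
  by apply: NNPP => H'; apply: H; exists n.
exists (maxn K n.+1) => -[|i] d /=.
  by move=> _ _; exists n; split=> //; rewrite leq_max leqnn orbT.
move=> /IH H /H [m [Hm Hm']]; exists m; split=> //.
by rewrite leq_max Hm.
Qed.

Lemma pre_eq x w1 w2 : shift w1 = x -> shift w2 = x -> w1 0 = w2 0 -> w1 = w2.
Proof.
move=> H1 H2 H0; apply: functional_extensionality => -[|n] //.
by have := congr1 (fun f => f n) H1; have := congr1 (fun f => f n) H2; rewrite /shift => -> ->.
Qed.

Definition lift K w y : seqN A := concat (window w 0 K.+1) (iter K (@shift A) y).

Lemma lift_at K w y n : lift K w y n = if n < K.+1 then w n else y (K + (n - K.+1)).
Proof.
rewrite /lift /concat size_mkseq; case: ifP => H.
  by rewrite nth_mkseq.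
by rewrite iter_shiftE.
Qed.

Lemma lift_shift K w y x : shift w = x -> window y 0 K = window x 0 K ->
  shift (lift K w y) = y.
Proof.
move=> Hw Hy; apply: functional_extensionality => n.
rewrite /shift lift_at ltnS; case: ltnP => H.
  have -> : w n.+1 = x n by rewrite -Hw.
  by rewrite (window_eq Hy).
by rewrite subSS subnKC.
Qed.

Lemma lift_self K w x : shift w = x -> lift K w x = w.
Proof.
move=> Hw; apply: functional_extensionality => n.
rewrite lift_at; case: ltnP => // H.
rewrite -Hw /shift; congr w.
lia.
Qed.

End Aux.

Theorem proposition3p4 (A : finType) (X : seqN A -> Prop) :
  subshift X -> shift_onto X ->
  finite_set (Spl X) -> (forall x, Spl X x -> ~ periodic x) ->
  forall x, Spl X x -> isolated_tilde X (imath x).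
Proof.
move=> _ _ [s Hs] _ x Sx.
have [K HK] := sep_list x s.
have key : forall y, X y -> klrel X K K.+1 y x -> y = x.
  move=> y Xy [Hw HP].
  case: Sx => Xx [w1 [w2 [X1 [X2 [ne [e1 e2]]]]]].
  have Hlift : forall w, X w -> shift w = x -> X (lift K w y).
    move=> w Xw ew.
    have : Pl X K.+1 (iter K (@shift A) x) (window w 0 K.+1).
      have sz : size (window w 0 K.+1) = K.+1 by rewrite size_mkseq.
      split; [|split=> //].
        by exists w, 0; split=> //; rewrite sz.
      by have := lift_self K ew; rewrite /lift => ->.
    by move/HP => [_ [_ H]].
  have Sy : Spl X y.
    split=> //; exists (lift K w1 y), (lift K w2 y); do !split.
    - exact: Hlift.
    - exact: Hlift.
    - move=> E; apply: ne; apply: (pre_eq e1 e2).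
      by have := congr1 (fun f => f 0) E; rewrite !lift_at.
    - exact: (lift_shift e1 Hw).
    - exact: (lift_shift e2 Hw).
  have [i Hi Hn] := Hs y Sy.
  apply: NNPP => nyx.
  have [n [Hn1 Hn2]] := HK i y Hi (eq_ind_r (fun t => t <> x) nyx Hn).
  by apply: Hn2; rewrite Hn; apply: window_eq Hw Hn1.
exists [:: (K, K.+1)]; split.
  by move=> p; rewrite inE => /eqP -> ; rewrite /inI /=.
move=> z [Xz Cz] Hz k l kl.
have Hz0 := Hz (K, K.+1) (mem_head _ _); rewrite /= /imath in Hz0.
pose k1 := maxn k K; pose l1 := k1 + maxn (l - k) 1.
have I1 : inI k1 l1 by rewrite /inI /l1 leq_addr.
have P1 : preceq K K.+1 k1 l1.
  by rewrite /preceq /l1 leq_maxr addKn subSn // subnn leq_maxr.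
have P2 : preceq k l k1 l1.
  by rewrite /preceq /l1 leq_maxl addKn leq_maxl.
have E : z k1 l1 = x.
  apply: key; first exact: Xz.
  apply: klrel_trans (Cz _ _ _ _ _ I1 P1) Hz0.
  by rewrite /inI.
have := Cz _ _ _ _ kl I1 P2; rewrite E => H.
exact: klrel_sym.
Qed.
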